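(* For each $n\ge1$: for all integers $k,l\ge 0$, $\phi_n(k)\phi_n(l)=\phi_n(2kl+k+l)$; and for all integers $k,l\ge1$, $\phi^*_n(k)\phi^*_n(l)=\phi^*_n(2kl)$ and $\phi^+_n(k)\phi^+_n(l)=\phi^+_n(kl)$, where products are taken in the group algebra $\mathbb{Q}[S_n]$.
   Context: For $\pi\in S_n$, $\Omega_\pi(m),\Omega^*_\pi(m),\Omega^+_\pi(m)$ are defined as follows. Integers are written with $\bar i=-i$, ordered $0<_{\mathbb Z}\bar1<_{\mathbb Z}1<_{\mathbb Z}\bar2<_{\mathbb Z}2<\cdots$, $|\bar j|=j$; $a\prec_+b$ means $a<_{\mathbb Z}b$ or $a=b\in\{0,1,\ldots\}$; $a\prec_-b$ means $a<_{\mathbb Z}b$ or $a=b\in\{\bar1,\bar2,\ldots\}$. A $\pi$-partition is $f:[n]\to\mathbb Z$ with, for $1\le i<n$, $f(\pi(i))\prec_+f(\pi(i+1))$ if $\pi(i)<\pi(i+1)$ and $f(\pi(i))\prec_-f(\pi(i+1))$ if $\pi(i)>\pi(i+1)$. $\Omega_\pi(m)$ counts $\pi$-partitions with all $|f(i)|\le m$; $\Omega^*_\pi(m)$ those also never $0$; $\Omega^+_\pi(m)$ those with values in $\{1,\ldots,m\}$. Set $x_m(\pi)=\Omega_\pi(m)/(2m+1)^n$ (for $m\ge0$), $x^*_m(\pi)=\Omega^*_\pi(m)/(2m)^n$, $x^+_m(\pi)=\Omega^+_\pi(m)/m^n$ (for $m\ge1$); these are the probabilities of obtaining $\pi$ from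 an $m$-shelf shuffler in lazy, standard and strict mode respectively. Define $\phi_n(m)=\sum_{\pi\in S_n}x_m(\pi)\pi$, $\phi^*_n(m)=\sum_{\pi}x^*_m(\pi)\pi$, $\phi^+_n(m)=\sum_\pi x^+_m(\pi)\pi$, with multiplication in $\mathbb Q[S_n]$ induced by composition of permutations. *)

(* Defs.v *)
From mathcomp Require Import all_boot all_order all_algebra all_fingroup.
Set Implicit Arguments. Unset Strict Implicit. Unset Printing Implicit Defensive.
Import Order.TTheory GRing.Theory Num.Theory.
Local Open Scope ring_scope.

(* Positions [n] = {1..n} are encoded as 'I_n = {0..n-1} (order preserved). *)

(* The order 0 <_Z -1 <_Z 1 <_Z -2 <_Z 2 <_Z ... via a rank into nat. *)
Definition zrank (a : int) : nat :=
  if (0 <= a) then (2 * `|a|)%N else (2 * `|a| - 1)%N.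
Definition ltZ (a b : int) : bool := (zrank a < zrank b)%N.
Definition precp (a b : int) : bool := ltZ a b || ((a == b) && (0 <= a)).
Definition precm (a b : int) : bool := ltZ a b || ((a == b) && (a < 0)).

Definition is_pipart (n : nat) (p : 'S_n) (f : 'I_n -> int) : bool :=
  [forall i : 'I_n, forall j : 'I_n, (nat_of_ord j == (nat_of_ord i).+1) ==>
     (if (p i < p j)%N then precp (f (p i)) (f (p j))
      else precm (f (p i)) (f (p j)))].

(* 'I_(2m+1) enumerates the integers in [-m, m] *)
Definition decode (m : nat) (j : 'I_(2 * m + 1)) : int := (nat_of_ord j)%:Z - m%:Z.

Definition Omega (n m : nat) (p : 'S_n) : nat :=
  #|[set g : {ffun 'I_n -> 'I_(2 * m + 1)} | is_pipart p (fun i => decode (g i))]|.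
Definition Omega_star (n m : nat) (p : 'S_n) : nat :=
  #|[set g : {ffun 'I_n -> 'I_(2 * m + 1)} |
      is_pipart p (fun i => decode (g i)) && [forall i, decode (g i) != 0]]|.
Definition Omega_plus (n m : nat) (p : 'S_n) : nat :=
  #|[set g : {ffun 'I_n -> 'I_(2 * m + 1)} |
      is_pipart p (fun i => decode (g i)) && [forall i, 0 < decode (g i)]]|.

Definition x_lazy (n m : nat) (p : 'S_n) : rat :=
  (Omega m p)%:R / ((2 * m + 1) ^ n)%N%:R.
Definition x_std (n m : nat) (p : 'S_n) : rat :=
  (Omega_star m p)%:R / ((2 * m) ^ n)%N%:R.
Definition x_strict (n m : nat) (p : 'S_n) : rat :=
  (Omega_plus m p)%:R / (m ^ n)%N%:R.

(* The group algebra Q[S_n]: coefficient functions S_n -> Q. *)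
Definition QS (n : nat) := {ffun 'S_n -> rat}.

(* composition of permutations: (comp p r) i = p (r i).
   (In MathComp, (r * p)%g i = p (r i).) *)
Definition comp (n : nat) (p r : 'S_n) : 'S_n := (r * p)%g.

Definition gmul (n : nat) (a b : QS n) : QS n :=
  [ffun s => \sum_(p : 'S_n) \sum_(r : 'S_n | comp p r == s) a p * b r].

Definition phi (n m : nat) : QS n := [ffun p => x_lazy m p].
Definition phi_star (n m : nat) : QS n := [ffun p => x_std m p].
Definition phi_plus (n m : nat) : QS n := [ffun p => x_strict m p].

(* Main.v *)
Require Import Defs.
From mathcomp Require Import all_boot all_order all_algebra all_fingroup zify.
Set Implicit Arguments. Unset Strict Implicit. Unset Printing Implicit Defensive.

Definition tie (n : nat) (b : bool) (i : 'I_n) : nat := if b then nat_of_ord i else (n.-1 - i)%N.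
Definition keyf (n : nat) (sg : nat -> bool) (c : nat) (i : 'I_n) : nat := (c * n + tie (sg c) i)%N.

Lemma lex_lt (n a b t1 t2 : nat) : (t1 < n)%N -> (t2 < n)%N ->
  (a * n + t1 < b * n + t2)%N = (a < b)%N || ((a == b) && (t1 < t2)%N).
Proof.
move=> h1 h2; case: (ltngtP a b) => hab /=.
- apply/idP; apply: (@leq_trans (a * n + n)); first by rewrite ltn_add2l.
  rewrite -mulSnr; apply: leq_trans (leq_addr _ _); exact: leq_mul.
- apply/negbTE; rewrite -leqNgt; apply: (@leq_trans (b * n + n)); first by rewrite leq_add2l ltnW.
  rewrite -mulSnr; apply: leq_trans (leq_addr _ _); exact: leq_mul.
- by rewrite hab ltn_add2l.
Qed.

Lemma lex_eq (n a b t1 t2 : nat) : (t1 < n)%N -> (t2 < n)%N ->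
  (a * n + t1 == b * n + t2) = (a == b) && (t1 == t2).
Proof.
move=> h1 h2; apply/eqP/andP => [h|[/eqP-> /eqP->]] //.
have e1 : (a * n + t1) %/ n = a by rewrite divnMDl ?divn_small ?addn0 //; lia.
have e2 : (b * n + t2) %/ n = b by rewrite divnMDl ?divn_small ?addn0 //; lia.
have ab : a = b by rewrite -e1 -e2 h.
by subst; split => //; move/eqP: h; rewrite eqn_add2l.
Qed.

Lemma tie_lt n b (i : 'I_n) : (tie b i < n)%N.
Proof. rewrite /tie; case: b => //=; have := ltn_ord i; lia. Qed.

Lemma tie_cmp n b (i j : 'I_n) : (tie b i < tie b j)%N = if b then (i < j)%N else (j < i)%N.
Proof. rewrite /tie; case: b => //=; have := ltn_ord i; have := ltn_ord j; move=> *; apply/idP/idP => ?; lia. Qed.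

Lemma tie_eq n b (i j : 'I_n) : (tie b i == tie b j) = (i == j).
Proof.
rewrite /tie; case: b => //=; have := ltn_ord i; have := ltn_ord j; move=> *.
apply/eqP/eqP => [h|->] //; apply: val_inj => /=; lia.
Qed.

Lemma keyf_lt n sg c d (i j : 'I_n) :
  (keyf sg c i < keyf sg d j)%N = (c < d)%N || ((c == d) && (tie (sg c) i < tie (sg d) j)%N).
Proof. by rewrite /keyf lex_lt ?tie_lt. Qed.

Lemma keyf_eq n sg c d (i j : 'I_n) :
  (keyf sg c i == keyf sg d j) = (c == d) && (i == j).
Proof.
rewrite /keyf lex_eq ?tie_lt //; case: eqP => //= ->; by rewrite tie_eq.
Qed.

Definition key n N (sg : nat -> bool) (w : 'I_n -> 'I_N) (i : 'I_n) : nat := keyf sg (w i) i.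

Lemma key_inj n N sg (w : 'I_n -> 'I_N) : injective (key sg w).
Proof. move=> i j /eqP; rewrite keyf_eq => /andP[_ /eqP] //. Qed.

Definition cmp (sg : nat -> bool) (x y : nat) (up : bool) : bool :=
  (x < y)%N || ((x == y) && (sg x == up)).

Lemma cmp_key n N sg (w : 'I_n -> 'I_N) (x y : 'I_n) : x != y ->
  cmp sg (w x) (w y) (x < y)%N = (key sg w x < key sg w y)%N.
Proof.
move=> hxy; rewrite /key keyf_lt /cmp; case: (ltngtP (w x) (w y)) => //= e.
rewrite e tie_cmp; have : (nat_of_ord x != nat_of_ord y) by [].
case: (sg (w y)); case: (ltngtP x y) => //.
Qed.

Definition is_pp n N sg (p : 'S_n) (w : 'I_n -> 'I_N) : bool :=
  [forall i : 'I_n, forall j : 'I_n, (nat_of_ord j == (nat_of_ord i).+1) ==>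
     cmp sg (w (p i)) (w (p j)) (p i < p j)%N].

Definition compat n N sg (p : 'S_n) (w : 'I_n -> 'I_N) : Prop :=
  forall i j : 'I_n, (i < j)%N = (key sg w (p i) < key sg w (p j))%N.

Lemma chain_lt n (F : 'I_n -> nat) :
  (forall i j : 'I_n, nat_of_ord j = (nat_of_ord i).+1 -> (F i < F j)%N) ->
  forall i j : 'I_n, (i < j)%N -> (F i < F j)%N.
Proof.
move=> H.
suff: forall d (i j : 'I_n), nat_of_ord j = (i + d.+1)%N -> (F i < F j)%N.
  move=> S i j lij; apply: (S (j - i.+1)%N); lia.
elim=> [|d IH] i j e; first by apply: H; rewrite e addn1.
have hm : (i + d.+1 < n)%N by have := ltn_ord j; lia.
apply: (@ltn_trans (F (Ordinal hm))); first exact: IH.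
by apply: H => /=; rewrite e; lia.
Qed.

Lemma is_ppP n N sg (p : 'S_n) (w : 'I_n -> 'I_N) : reflect (compat sg p w) (is_pp sg p w).
Proof.
have cons_eq : forall i j : 'I_n, nat_of_ord j = (nat_of_ord i).+1 ->
   cmp sg (w (p i)) (w (p j)) (p i < p j)%N = (key sg w (p i) < key sg w (p j))%N.
  move=> i j e; apply: cmp_key; apply/eqP => /perm_inj eij; move: e; rewrite eij; lia.
apply: (iffP idP).
- move=> /forallP H.
  have H2 : forall i j : 'I_n, nat_of_ord j = (nat_of_ord i).+1 -> (key sg w (p i) < key sg w (p j))%N.
    move=> i j e; rewrite -cons_eq //; move/forallP: (H i) => /(_ j); rewrite e eqxx; exact.
  move=> i j; case: (ltngtP i j) => hij.
  + by apply/esym; apply: (chain_lt (F := fun k => key sg w (p k))).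
  + apply/esym/negbTE; rewrite -leqNgt ltnW //.
    by apply: (chain_lt (F := fun k => key sg w (p k))).
  + have e : i = j by apply: val_inj.
    by rewrite e ltnn.
- move=> C; apply/forallP => i; apply/forallP => j; apply/implyP => /eqP e.
  by rewrite cons_eq // -C e.
Qed.

Definition rank n N sg (w : 'I_n -> 'I_N) (x : 'I_n) : nat :=
  #|[set y | (key sg w y < key sg w x)%N]|.

Lemma rank_lt n N sg (w : 'I_n -> 'I_N) x : (rank sg w x < n)%N.
Proof.
have : [set y | (key sg w y < key sg w x)%N] \subset [set~ x].
  apply/subsetP => y; rewrite !inE => h; apply/eqP => e; move: h; rewrite e ltnn //.
move=> /subset_leq_card; rewrite cardsC1 card_ord /rank.
have := ltn_ord x; lia.
Qed.

Lemma rank_mono n N sg (w : 'I_n -> 'I_N) x y :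
  (key sg w x < key sg w y)%N -> (rank sg w x < rank sg w y)%N.
Proof.
move=> h; apply: proper_card; apply/properP; split.
  by apply/subsetP => z; rewrite !inE => hz; apply: ltn_trans h.
by exists x; rewrite !inE ?ltnn.
Qed.

Lemma rank_cmp n N sg (w : 'I_n -> 'I_N) x y :
  (rank sg w x < rank sg w y)%N = (key sg w x < key sg w y)%N.
Proof.
case: (ltngtP (key sg w x) (key sg w y)) => h.
- by apply: rank_mono.
- by apply/negbTE; rewrite -leqNgt ltnW // rank_mono.
- by rewrite (key_inj h) ltnn.
Qed.

Definition rank_ord n N sg (w : 'I_n -> 'I_N) x : 'I_n := Ordinal (rank_lt sg w x).

Lemma rank_ord_inj n N sg (w : 'I_n -> 'I_N) : injective (rank_ord sg w).
Proof.
move=> x y /(congr1 val) /= e; apply: (@key_inj _ _ sg w).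
case: (ltngtP (key sg w x) (key sg w y)) => // h; 
  by have := rank_mono h; rewrite e ltnn.
Qed.

Definition rperm n N sg (w : 'I_n -> 'I_N) : 'S_n := perm (@rank_ord_inj n N sg w).
Definition std n N sg (w : 'I_n -> 'I_N) : 'S_n := ((rperm sg w)^-1)%g.

Lemma rperm_cmp n N sg (w : 'I_n -> 'I_N) x y :
  (rperm sg w x < rperm sg w y)%N = (key sg w x < key sg w y)%N.
Proof. by rewrite !permE /= rank_cmp. Qed.

Lemma rperm_std n N sg (w : 'I_n -> 'I_N) i : rperm sg w (std sg w i) = i.
Proof. by rewrite /std permKV. Qed.

Lemma std_rperm n N sg (w : 'I_n -> 'I_N) i : std sg w (rperm sg w i) = i.
Proof. by rewrite /std permK. Qed.

Lemma compat_std n N sg (w : 'I_n -> 'I_N) : compat sg (std sg w) w.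
Proof. by move=> i j; rewrite -rperm_cmp !rperm_std. Qed.

Lemma card_lt_ord n (j : 'I_n) : #|[set i : 'I_n | (i < j)%N]| = j.
Proof.
have hj : (j <= n)%N by apply: ltnW.
have -> : [set i : 'I_n | (i < j)%N] = widen_ord hj @: [set: 'I_j].
  apply/setP => i; rewrite !inE; apply/idP/imsetP => [h|[k _ ->]]; last exact: ltn_ord k.
  by exists (Ordinal h) => //; apply: val_inj.
rewrite card_imset ?cardsT ?card_ord //; move=> a b /(congr1 val) /= e; exact: val_inj.
Qed.

Lemma compat_uniq n N sg (p : 'S_n) (w : 'I_n -> 'I_N) : compat sg p w -> p = std sg w.
Proof.
move=> C; apply/permP => j; apply: (@perm_inj _ (rperm sg w)); rewrite rperm_std.
rewrite permE; apply: val_inj => /=; rewrite /rank.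
rewrite -(card_preimset _ (@perm_inj _ p)).
have -> : p @^-1: [set y | (key sg w y < key sg w (p j))%N] = [set i : 'I_n | (i < j)%N].
  by apply/setP => i; rewrite !inE C.
exact: card_lt_ord.
Qed.

Lemma is_pp_std n N sg (p : 'S_n) (w : 'I_n -> 'I_N) : is_pp sg p w = (std sg w == p).
Proof.
apply/is_ppP/eqP => [C|<-]; [exact/esym/compat_uniq | exact: compat_std].
Qed.

Lemma pos_of_ord B A (c : 'I_(B * A)) : (0 < A)%N.
Proof. case: A c => [|//]; rewrite muln0 => c; by case: c. Qed.

Definition cA A (s : bool) (a : nat) : nat := if s then a else (A.-1 - a)%N.

Lemma cA_lt A s (a : 'I_A) : (cA A s a < A)%N.
Proof. rewrite /cA; case: s => //; have := ltn_ord a; lia. Qed.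

Lemma code_lt_proof B A (b : 'I_B) t : (t < A)%N -> (b * A + t < B * A)%N.
Proof.
move=> h; apply: (@leq_trans (b * A + A)); first by rewrite ltn_add2l.
by rewrite -mulSnr leq_mul2r ltn_ord orbT.
Qed.

Definition code B A (sgB : nat -> bool) (b : 'I_B) (a : 'I_A) : 'I_(B * A) :=
  Ordinal (code_lt_proof b (cA_lt (sgB b) a)).

Lemma db_proof B A (c : 'I_(B * A)) : (c %/ A < B)%N.
Proof. by rewrite ltn_divLR ?(pos_of_ord c) // ltn_ord. Qed.

Lemma da_proof B A (s : bool) (c : 'I_(B * A)) : (cA A s (c %% A) < A)%N.
Proof.
have hA := pos_of_ord c; have : (c %% A < A)%N by rewrite ltn_mod.
rewrite /cA; case: s => //; lia.
Qed.

Definition db B A (c : 'I_(B * A)) : 'I_B := Ordinal (db_proof c).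
Definition da B A (sgB : nat -> bool) (c : 'I_(B * A)) : 'I_A :=
  Ordinal (da_proof (sgB (c %/ A)) c).

Lemma cAK A s (a : nat) : (a < A)%N -> cA A s (cA A s a) = a.
Proof. rewrite /cA; case: s => //; lia. Qed.

Lemma code_dadb B A sgB (c : 'I_(B * A)) : code sgB (db c) (da sgB c) = c.
Proof.
have hA := pos_of_ord c.
apply: val_inj => /=; rewrite cAK ?ltn_mod //.
by rewrite [in RHS](divn_eq c A).
Qed.

Lemma code_div B A sgB (b : 'I_B) (a : 'I_A) : ((code sgB b a) %/ A)%N = b.
Proof.
have hA : (0 < A)%N by case: A a => [[]|].
by rewrite /= divnMDl // divn_small ?addn0 // cA_lt.
Qed.

Lemma db_code B A sgB (b : 'I_B) (a : 'I_A) : db (code sgB b a) = b.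
Proof. by apply: val_inj => /=; rewrite code_div. Qed.

Lemma da_code B A sgB (b : 'I_B) (a : 'I_A) : da sgB (code sgB b a) = a.
Proof.
have hA : (0 < A)%N by case: A a => [[]|].
apply: val_inj => /=; rewrite code_div modnMDl modn_small ?cA_lt // cAK //.
Qed.

Lemma code_lt B A sgB (b1 b2 : 'I_B) (a1 a2 : 'I_A) :
  (code sgB b1 a1 < code sgB b2 a2)%N =
  (b1 < b2)%N || ((nat_of_ord b1 == b2) && (if sgB b1 then (a1 < a2)%N else (a2 < a1)%N)).
Proof.
rewrite /= lex_lt ?cA_lt //; case: eqP => //= ->; rewrite /cA.
case: (sgB b2) => //; have := ltn_ord a1; have := ltn_ord a2; move=> *; apply/idP/idP; lia.
Qed.

Lemma code_eq B A sgB (b1 b2 : 'I_B) (a1 a2 : 'I_A) :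
  (nat_of_ord (code sgB b1 a1) == code sgB b2 a2) =
  (nat_of_ord b1 == b2) && (nat_of_ord a1 == a2).
Proof.
rewrite /= lex_eq ?cA_lt //; case: eqP => //= ->; rewrite /cA.
case: (sgB b2) => //; have := ltn_ord a1; have := ltn_ord a2; move=> *; apply/eqP/eqP; lia.
Qed.

Lemma core n B A (sgA sgB sgC : nat -> bool)
  (hC : forall (b : 'I_B) (a : 'I_A), sgC (code sgB b a) = (sgB b == sgA a))
  (X Y x y : 'I_n) (b1 b2 : 'I_B) (a1 a2 : 'I_A) :
  (nat_of_ord X != Y) -> (nat_of_ord x != y) ->
  (x < y)%N = (keyf sgA a1 X < keyf sgA a2 Y)%N ->
  (keyf sgC (code sgB b1 a1) X < keyf sgC (code sgB b2 a2) Y)%N =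
  (keyf sgB b1 x < keyf sgB b2 y)%N.
Proof.
move=> nXY nxy H; rewrite keyf_lt in H.
rewrite [X in X = _]keyf_lt [X in _ = X]keyf_lt code_lt code_eq !hC.
case: (ltngtP b1 b2) => //= eb; rewrite eb [X in _ = X]tie_cmp.
case: (ltngtP a1 a2) H => //= ea H.
- by case: (sgB b2) => /=; move: H nxy; case: (ltngtP x y).
- by case: (sgB b2) => /=; move: H nxy; case: (ltngtP x y).
- move: H; rewrite ea tie_cmp !tie_cmp.
  case: (sgB b2); case: (sgA a2) => /=.
  all: move: nXY nxy; case: (ltngtP X Y) => //; case: (ltngtP x y) => //.
Qed.

Definition Phi n B A (sgA sgB : nat -> bool)
  (uv : {ffun 'I_n -> 'I_A} * {ffun 'I_n -> 'I_B}) : {ffun 'I_n -> 'I_(B * A)} :=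
  [ffun x => code sgB (uv.2 (rperm sgA uv.1 x)) (uv.1 x)].

Lemma std_Phi n B A (sgA sgB sgC : nat -> bool)
  (hC : forall (b : 'I_B) (a : 'I_A), sgC (code sgB b a) = (sgB b == sgA a))
  (u : {ffun 'I_n -> 'I_A}) (v : {ffun 'I_n -> 'I_B}) :
  std sgC (Phi sgA sgB (u, v)) = (std sgB v * std sgA u)%g.
Proof.
apply/esym/compat_uniq => i j.
case: (eqVneq i j) => [<-|nij]; first by rewrite !ltnn.
rewrite /key !permM !ffunE /= !rperm_std.
have nx : nat_of_ord (std sgB v i) != std sgB v j.
  by apply: contra nij => /eqP /val_inj /perm_inj ->.
have nX : nat_of_ord (std sgA u (std sgB v i)) != std sgA u (std sgB v j).
  by apply: contra nx => /eqP /val_inj /perm_inj ->.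
rewrite (core hC _ _ nX nx); first exact: compat_std.
exact: compat_std.
Qed.

Lemma Phi_inj n B A (sgA sgB : nat -> bool) : injective (@Phi n B A sgA sgB).
Proof.
move=> [u v] [u' v'] /ffunP H.
have eu : u = u'.
  apply/ffunP => x; have := H x; rewrite !ffunE /= => /(congr1 (da sgB)).
  by rewrite !da_code.
subst u'; congr pair; apply/ffunP => i.
have := H (std sgA u i); rewrite !ffunE /= => /(congr1 (@db _ _)).
by rewrite !db_code rperm_std.
Qed.

Lemma count_main n B A (sgA sgB sgC : nat -> bool)
  (hC : forall (b : 'I_B) (a : 'I_A), sgC (code sgB b a) = (sgB b == sgA a))
  (s : 'S_n) :
  #|[set uv : {ffun 'I_n -> 'I_A} * {ffun 'I_n -> 'I_B} |
      (std sgB uv.2 * std sgA uv.1)%g == s]| =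
  #|[set w : {ffun 'I_n -> 'I_(B * A)} | std sgC w == s]|.
Proof.
rewrite -(card_imset _ (@Phi_inj n B A sgA sgB)); apply: eq_card => w.
rewrite inE; apply/imsetP/idP.
- by move=> [[u v]]; rewrite inE /= => /eqP H ->; rewrite std_Phi // H.
- move=> /eqP H.
  pose u : {ffun 'I_n -> 'I_A} := [ffun x => da sgB (w x)].
  pose v : {ffun 'I_n -> 'I_B} := [ffun i => db (w (std sgA u i))].
  have E : Phi sgA sgB (u, v) = w.
    by apply/ffunP => x; rewrite !ffunE /= std_rperm code_dadb.
  by exists (u, v); [rewrite inE /= -(std_Phi hC) E H | rewrite E].
Qed.

Lemma card_setE (T : finType) (P : pred T) : #|[set x | P x]| = \sum_x (P x : nat).
Proof.
rewrite -sum1_card big_mkcond /=; apply: eq_bigr => x _; rewrite inE; by case: (P x).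
Qed.

Lemma sum_main n B A (sgA sgB sgC : nat -> bool)
  (hC : forall (b : 'I_B) (a : 'I_A), sgC (code sgB b a) = (sgB b == sgA a))
  (s : 'S_n) :
  (\sum_(p : 'S_n) \sum_(r : 'S_n | (r * p)%g == s)
     #|[set u : {ffun 'I_n -> 'I_A} | is_pp sgA p u]| *
     #|[set v : {ffun 'I_n -> 'I_B} | is_pp sgB r v]|)%N =
  #|[set w : {ffun 'I_n -> 'I_(B * A)} | is_pp sgC s w]|.
Proof.
have E : forall (N : nat) sg (p : 'S_n),
    #|[set u : {ffun 'I_n -> 'I_N} | is_pp sg p u]| =
    \sum_(u : {ffun 'I_n -> 'I_N}) ((std sg u == p) : nat).
  by move=> N sg p; rewrite card_setE; apply: eq_bigr => u _; rewrite is_pp_std.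
have -> : #|[set w : {ffun 'I_n -> 'I_(B * A)} | is_pp sgC s w]| =
          #|[set w : {ffun 'I_n -> 'I_(B * A)} | std sgC w == s]|.
  by apply: eq_card => w; rewrite !inE is_pp_std.
rewrite -(count_main hC) [in RHS]card_setE.
rewrite -(pair_bigA _ (fun (u : {ffun 'I_n -> 'I_A}) (v : {ffun 'I_n -> 'I_B}) => (((std sgB v * std sgA u)%g == s) : nat))) /=.
transitivity (\sum_(p : 'S_n) \sum_(r : 'S_n | (r * p)%g == s)
   \sum_(u : {ffun 'I_n -> 'I_A}) \sum_(v : {ffun 'I_n -> 'I_B})
     ((std sgA u == p) * (std sgB v == r))%N).
  apply: eq_bigr => p _; apply: eq_bigr => r _; rewrite !E big_distrl.
  by apply: eq_bigr => u _; rewrite big_distrr.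
transitivity (\sum_(p : 'S_n) \sum_(u : {ffun 'I_n -> 'I_A}) \sum_(r : 'S_n | (r * p)%g == s)
   \sum_(v : {ffun 'I_n -> 'I_B})
     ((std sgA u == p) * (std sgB v == r))%N).
  by apply: eq_bigr => p _; rewrite exchange_big.
rewrite exchange_big; apply: eq_bigr => u _.
transitivity (\sum_(p : 'S_n) \sum_(v : {ffun 'I_n -> 'I_B}) \sum_(r : 'S_n | (r * p)%g == s)
     ((std sgA u == p) * (std sgB v == r))%N).
  by apply: eq_bigr => p _; rewrite exchange_big.
rewrite exchange_big; apply: eq_bigr => v _.
rewrite (bigD1 (std sgA u)) //= eqxx.
rewrite [X in _ + X]big1 ?addn0; last first.
  move=> p /negbTE hp; apply: big1 => r _; by rewrite eq_sym hp.
case: (boolP ((std sgB v * std sgA u)%g == s)) => h.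
- rewrite (bigD1 (std sgB v)) //= eqxx big1 // => r /andP[_ hr].
  by rewrite eq_sym (negbTE hr).
- apply: big1 => r hr; case: eqP => // e; move: h; by rewrite e hr.
Qed.

Definition Cnt n N (sg : nat -> bool) (p : 'S_n) : nat :=
  #|[set w : {ffun 'I_n -> 'I_N} | is_pp sg p w]|.

Lemma transfer n m N (sg : nat -> bool) (P : pred 'I_(2 * m + 1))
  (h : 'I_(2 * m + 1) -> 'I_N) (h' : 'I_N -> 'I_(2 * m + 1))
  (hP : forall z, P (h' z)) (hK : forall z, h (h' z) = z)
  (hK' : forall x, P x -> h' (h x) = x)
  (hmono : forall x y, P x -> P y -> forall up : bool,
     (if up then precp (decode x) (decode y) else precm (decode x) (decode y)) =
     cmp sg (h x) (h y) up)
  (p : 'S_n) :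
  #|[set g : {ffun 'I_n -> 'I_(2 * m + 1)} |
      is_pipart p (fun i => decode (g i)) && [forall i, P (g i)]]| = Cnt N sg p.
Proof.
have Finj : injective (fun w : {ffun 'I_n -> 'I_N} => [ffun i => h' (w i)]).
  move=> w1 w2 /ffunP E; apply/ffunP => i; have := E i; rewrite !ffunE => /(congr1 h).
  by rewrite !hK.
have K : forall g : {ffun 'I_n -> 'I_(2 * m + 1)}, (forall i, P (g i)) ->
    is_pipart p (fun i => decode (g i)) = is_pp sg p [ffun i => h (g i)].
  move=> g hg; rewrite /is_pipart /is_pp; apply: eq_forallb => i; apply: eq_forallb => j.
  by rewrite !ffunE hmono.
rewrite /Cnt -(card_imset _ Finj); apply: eq_card => g; rewrite inE; apply/andP/imsetP.
- move=> [H1 /forallP H2]; exists [ffun i => h (g i)]; first by rewrite inE -K.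
  by apply/ffunP => i; rewrite !ffunE hK'.
- move=> [w Hw ->]; have hg : forall i, P ([ffun i => h' (w i)] i) by move=> i; rewrite ffunE.
  split; last by apply/forallP.
  rewrite K //.
  have -> : [ffun i => h ([ffun i => h' (w i)] i)] = w.
    by apply/ffunP => i; rewrite !ffunE hK.
  by move: Hw; rewrite inE.
Qed.

Definition zr (m x : nat) : nat := if (m <= x)%N then (2 * (x - m))%N else (2 * (m - x) - 1)%N.

Lemma decode_eq m (x y : 'I_(2 * m + 1)) : (decode x == decode y) = (nat_of_ord x == y).
Proof. rewrite /decode; apply/eqP/eqP; lia. Qed.
Lemma decode_ge0 m (x : 'I_(2 * m + 1)) : (0 <= decode x)%R = (m <= x)%N.
Proof. rewrite /decode; apply/idP/idP; lia. Qed.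
Lemma decode_lt0 m (x : 'I_(2 * m + 1)) : (decode x < 0)%R = (x < m)%N.
Proof. rewrite /decode; apply/idP/idP; lia. Qed.
Lemma decode_gt0 m (x : 'I_(2 * m + 1)) : (0 < decode x)%R = (m < x)%N.
Proof. rewrite /decode; apply/idP/idP; lia. Qed.
Lemma decode_neq0 m (x : 'I_(2 * m + 1)) : (decode x != 0)%R = (nat_of_ord x != m).
Proof. rewrite /decode; apply/negP/negP => /eqP h; apply/eqP; lia. Qed.
Lemma zrank_decode m (x : 'I_(2 * m + 1)) : zrank (decode x) = zr m x.
Proof. rewrite /zrank decode_ge0 /zr; case: leqP => h; rewrite /decode; lia. Qed.

Lemma zr_eq m x y : (zr m x == zr m y) = (x == y).
Proof. rewrite /zr; case: (leqP m x) => ?; case: (leqP m y) => ?; apply/eqP/eqP; lia. Qed.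
Lemma zr_par m x : (zr m x %% 2 == 0)%N = (m <= x)%N.
Proof. rewrite /zr; case: leqP => h; apply/eqP; lia. Qed.

Definition sgL (z : nat) : bool := (z %% 2 == 0)%N.

Lemma hL_proof m (x : 'I_(2 * m + 1)) : (zr m x < 2 * m + 1)%N.
Proof. have := ltn_ord x; rewrite /zr; case: (leqP m x) => *; lia. Qed.
Definition hL m (x : 'I_(2 * m + 1)) : 'I_(2 * m + 1) := Ordinal (hL_proof x).
Definition iL m (z : nat) : nat := if (z %% 2 == 0)%N then (m + z %/ 2)%N else (m - (z + 1) %/ 2)%N.
Lemma iL_proof m (z : 'I_(2 * m + 1)) : (iL m z < 2 * m + 1)%N.
Proof. have := ltn_ord z; rewrite /iL; case: (z %% 2 =P 0)%N => *; lia. Qed.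
Definition h'L m (z : 'I_(2 * m + 1)) : 'I_(2 * m + 1) := Ordinal (iL_proof z).

Lemma Omega_Cnt n m (p : 'S_n) : Omega m p = Cnt (2 * m + 1) sgL p.
Proof.
rewrite -(@transfer n m (2 * m + 1) sgL predT (@hL m) (@h'L m)) //.
- apply: eq_card => g; rewrite !inE; have -> : [forall i, predT (g i)] by apply/forallP.
  by rewrite andbT.
- move=> z; apply: val_inj => /=; have := ltn_ord z; rewrite /zr /iL.
  case: (z %% 2 =P 0)%N => ? ?.
  + rewrite ifT; [lia | lia].
  + rewrite ifN; [lia | lia].
- move=> x _; apply: val_inj => /=; have := ltn_ord x; rewrite /zr /iL.
  case: (leqP m x) => ? ?.
  + rewrite ifT; [lia | apply/eqP; lia].
  + rewrite ifN; [lia | apply/eqP; lia].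
- move=> x y _ _ up; rewrite /precp /precm /ltZ /cmp /sgL /= !zrank_decode decode_eq
    decode_ge0 decode_lt0 zr_eq zr_par.
  by case: up => /=; [rewrite eqb_id | rewrite eqbF_neg -ltnNge].
Qed.

Definition sgS (z : nat) : bool := (z %% 2 == 1)%N.

Lemma hS_proof m (hm : (0 < m)%N) (x : 'I_(2 * m + 1)) : (zr m x - 1 < 2 * m)%N.
Proof. have := ltn_ord x; rewrite /zr; case: (leqP m x) => *; lia. Qed.
Definition hS m (hm : (0 < m)%N) (x : 'I_(2 * m + 1)) : 'I_(2 * m) := Ordinal (hS_proof hm x).
Definition iS m (z : nat) : nat :=
  if (z %% 2 == 1)%N then (m + (z + 1) %/ 2)%N else (m - z %/ 2 - 1)%N.
Lemma iS_proof m (z : 'I_(2 * m)) : (iS m z < 2 * m + 1)%N.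
Proof. have := ltn_ord z; rewrite /iS; case: (z %% 2 =P 1)%N => *; lia. Qed.
Definition h'S m (z : 'I_(2 * m)) : 'I_(2 * m + 1) := Ordinal (iS_proof z).

Lemma Omega_star_Cnt n m (hm : (0 < m)%N) (p : 'S_n) : Omega_star m p = Cnt (2 * m) sgS p.
Proof.
rewrite -(@transfer n m (2 * m) sgS (fun x => decode x != 0)%R (hS hm) (@h'S m)) //.
- move=> z; rewrite decode_neq0 /=; have := ltn_ord z; rewrite /iS.
  case: (z %% 2 =P 1)%N => ? ?; apply/eqP; lia.
- move=> z; apply: val_inj => /=; have := ltn_ord z; rewrite /zr /iS.
  case: (z %% 2 =P 1)%N => ? ?.
  + rewrite ifT; [lia | lia].
  + rewrite ifN; [lia | lia].
- move=> x; rewrite decode_neq0 => /eqP hx; apply: val_inj => /=; have := ltn_ord x; rewrite /zr /iS.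
  case: (leqP m x) => ? ?.
  + rewrite ifT; [lia | apply/eqP; lia].
  + rewrite ifN; [lia | apply/eqP; lia].
- move=> x y; rewrite !decode_neq0 => /eqP hx /eqP hy up.
  rewrite /precp /precm /ltZ /cmp /sgS /= !zrank_decode decode_eq decode_ge0 decode_lt0.
  have e1 : (zr m x - 1 < zr m y - 1)%N = (zr m x < zr m y)%N.
    rewrite /zr; case: (leqP m x) => ?; case: (leqP m y) => ?; apply/idP/idP; lia.
  have e2 : (zr m x - 1 == zr m y - 1)%N = (nat_of_ord x == y).
    rewrite /zr; case: (leqP m x) => ?; case: (leqP m y) => ?; apply/eqP/eqP; lia.
  have e3 : ((zr m x - 1) %% 2 == 1)%N = (m <= x)%N.
    rewrite /zr; case: (leqP m x) => ?; apply/eqP; lia.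
  rewrite e1 e2 e3.
  by case: up => /=; [rewrite eqb_id | rewrite eqbF_neg -ltnNge].
Qed.

Definition sgT (z : nat) : bool := true.

Lemma hP_proof m (hm : (0 < m)%N) (x : 'I_(2 * m + 1)) : (x - m - 1 < m)%N.
Proof. have := ltn_ord x; lia. Qed.
Definition hP m (hm : (0 < m)%N) (x : 'I_(2 * m + 1)) : 'I_m := Ordinal (hP_proof hm x).
Lemma iP_proof m (z : 'I_m) : (z + m + 1 < 2 * m + 1)%N.
Proof. have := ltn_ord z; lia. Qed.
Definition h'P m (z : 'I_m) : 'I_(2 * m + 1) := Ordinal (iP_proof z).

Lemma Omega_plus_Cnt n m (hm : (0 < m)%N) (p : 'S_n) : Omega_plus m p = Cnt m sgT p.
Proof.
rewrite -(@transfer n m m sgT (fun x => 0 < decode x)%R (hP hm) (@h'P m)) //.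
- by move=> z; rewrite decode_gt0 /=; lia.
- by move=> z; apply: val_inj => /=; lia.
- by move=> x; rewrite decode_gt0 => hx; apply: val_inj => /=; lia.
- move=> x y; rewrite !decode_gt0 => hx hy up.
  rewrite /precp /precm /ltZ /cmp /sgT /= !zrank_decode decode_eq decode_ge0 decode_lt0.
  have e1 : (x - m - 1 < y - m - 1)%N = (zr m x < zr m y)%N.
    rewrite /zr; case: (leqP m x) => ?; case: (leqP m y) => ?; apply/idP/idP; lia.
  have e2 : (x - m - 1 == y - m - 1)%N = (nat_of_ord x == y).
    apply/eqP/eqP; lia.
  have e3 : (m <= x)%N by lia.
  rewrite e1 e2; move: e3; case: (leqP m x) => // _ _.
  by case: up => /=; rewrite ?andbT ?andbF.
Qed.

Lemma sum_Cnt n B A (sgA sgB sgC : nat -> bool)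
  (hC : forall (b : 'I_B) (a : 'I_A), sgC (code sgB b a) = (sgB b == sgA a))
  (s : 'S_n) :
  (\sum_(p : 'S_n) \sum_(r : 'S_n | Defs.comp p r == s) Cnt A sgA p * Cnt B sgB r)%N =
  Cnt (B * A) sgC s.
Proof. exact: sum_main hC s. Qed.

Lemma parL k t b a : (a < 2 * k + 1)%N ->
  ((2 * t + b + (if (b %% 2 == 0)%N then a else ((2 * k + 1).-1 - a)%N)) %% 2 == 0)%N =
  ((b %% 2 == 0)%N == (a %% 2 == 0)%N).
Proof.
move=> h.
case: (boolP (b %% 2 == 0)%N) => hb; move/eqP: hb => hb /=.
- case: ((2 * t + b + a) %% 2 =P 0)%N; case: (a %% 2 =P 0)%N => /= *; try done; exfalso; lia.
- case: ((2 * t + b + ((2 * k + 1).-1 - a)) %% 2 =P 0)%N; case: (a %% 2 =P 0)%N => /= *;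
    try done; exfalso; lia.
Qed.

Lemma parS k t b a : (a < 2 * k)%N ->
  ((2 * t + (if (b %% 2 == 1)%N then a else ((2 * k).-1 - a)%N)) %% 2 == 1)%N =
  ((b %% 2 == 1)%N == (a %% 2 == 1)%N).
Proof.
move=> h.
case: (boolP (b %% 2 == 1)%N) => hb; move/eqP: hb => hb /=.
- case: ((2 * t + a) %% 2 =P 1)%N; case: (a %% 2 =P 1)%N => /= *; try done; exfalso; lia.
- case: ((2 * t + ((2 * k).-1 - a)) %% 2 =P 1)%N; case: (a %% 2 =P 1)%N => /= *;
    try done; exfalso; lia.
Qed.

Lemma hC_lazy k l : forall (b : 'I_(2 * l + 1)) (a : 'I_(2 * k + 1)),
  sgL (code sgL b a) = (sgL b == sgL a).
Proof.
move=> b a; rewrite /sgL /= /cA mulnDr muln1 mulnCA; exact: parL.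
Qed.

Lemma hC_star k l : forall (b : 'I_(2 * l)) (a : 'I_(2 * k)),
  sgS (code sgS b a) = (sgS b == sgS a).
Proof.
move=> b a; rewrite /sgS /= /cA mulnCA; exact: parS.
Qed.

Lemma hC_plus k l : forall (b : 'I_l) (a : 'I_k), sgT (code sgT b a) = (sgT b == sgT a).
Proof. by []. Qed.

Import GRing.Theory.
Local Open Scope ring_scope.

Lemma gmul_gen n B A (sgA sgB sgC : nat -> bool)
  (hC : forall (b : 'I_B) (a : 'I_A), sgC (code sgB b a) = (sgB b == sgA a))
  (a b : QS n)
  (ha : forall p, a p = (Cnt A sgA p)%:R / ((A ^ n)%N)%:R)
  (hb : forall r, b r = (Cnt B sgB r)%:R / ((B ^ n)%N)%:R) (s : 'S_n) :
  gmul a b s = (Cnt (B * A) sgC s)%:R / (((B * A) ^ n)%N)%:R.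
Proof.
rewrite /gmul ffunE -(sum_Cnt hC s) natr_sum mulr_suml; apply: eq_bigr => p _.
rewrite natr_sum mulr_suml; apply: eq_bigr => r _.
rewrite ha hb mulf_div -!natrM; congr (_ / _%:R); by rewrite expnMn mulnC.
Qed.

Local Close Scope ring_scope.

Theorem corollary3p7 (n : nat) : (1 <= n)%N ->
  (forall k l : nat,
      gmul (phi n k) (phi n l) = phi n (2 * k * l + k + l)) /\
  (forall k l : nat, (1 <= k)%N -> (1 <= l)%N ->
      gmul (phi_star n k) (phi_star n l) = phi_star n (2 * k * l)) /\
  (forall k l : nat, (1 <= k)%N -> (1 <= l)%N ->
      gmul (phi_plus n k) (phi_plus n l) = phi_plus n (k * l)).
Proof.
move=> _; split; [|split].
- move=> k l; apply/ffunP => s.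
  rewrite (@gmul_gen n (2 * l + 1) (2 * k + 1) sgL sgL sgL (@hC_lazy k l)); first last.
  + by move=> r; rewrite ffunE /x_lazy Omega_Cnt.
  + by move=> p; rewrite ffunE /x_lazy Omega_Cnt.
  rewrite ffunE /x_lazy Omega_Cnt.
  have -> : ((2 * l + 1) * (2 * k + 1) = 2 * (2 * k * l + k + l) + 1)%N by nia.
  by [].
- move=> k l hk hl; apply/ffunP => s.
  rewrite (@gmul_gen n (2 * l) (2 * k) sgS sgS sgS (@hC_star k l)); first last.
  + by move=> r; rewrite ffunE /x_std Omega_star_Cnt.
  + by move=> p; rewrite ffunE /x_std Omega_star_Cnt.
  rewrite ffunE /x_std Omega_star_Cnt; last by rewrite muln_gt0 !muln_gt0 hk hl.
  have -> : ((2 * l) * (2 * k) = 2 * (2 * k * l))%N by nia.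
  by [].
- move=> k l hk hl; apply/ffunP => s.
  rewrite (@gmul_gen n l k sgT sgT sgT (@hC_plus k l)); first last.
  + by move=> r; rewrite ffunE /x_strict Omega_plus_Cnt.
  + by move=> p; rewrite ffunE /x_strict Omega_plus_Cnt.
  rewrite ffunE /x_strict Omega_plus_Cnt; last by rewrite muln_gt0 hk hl.
  by rewrite mulnC.
Qed.
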